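(* For every integer $N\ge16$, \[ h(N)\le \lfloor\sqrt{N}\rfloor+\big\lfloor\sqrt{\lfloor\sqrt{N}\rfloor}\big\rfloor+2. \]
   Context: A finite set $A\subseteq\mathbb{Z}$ is Sidon if $a+b=c+d$ with $a,b,c,d\in A$ implies $\{a,b\}=\{c,d\}$ as unordered pairs. For a natural number $N$, $h(N)=\max\{|A| : A\subseteq\{1,\dots,N\},\ A\text{ Sidon}\}$. *)

(* Defs.v *)
From mathcomp Require Import all_boot.
Set Implicit Arguments. Unset Strict Implicit. Unset Printing Implicit Defensive.

Definition sidonb (N : nat) (A : {set 'I_N.+1}) : bool :=
  [forall a in A, forall b in A, forall c in A, forall d in A,
     (a + b == c + d)%N ==> ((a == c) && (b == d)) || ((a == d) && (b == c))].

(* Sidon subsets of {1,...,N}: sets of 'I_N.+1 avoiding 0. *)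
Definition sidon_in (N : nat) (A : {set 'I_N.+1}) : bool :=
  (ord0 \notin A) && sidonb A.

Definition h (N : nat) : nat :=
  \max_(A : {set 'I_N.+1} | sidon_in A) #|A|.

Definition isqrt (n : nat) : nat := \max_(k < n.+1 | k * k <= n) k.

(* Main.v *)
Require Import Defs.
From mathcomp Require Import all_boot zify.
Set Implicit Arguments. Unset Strict Implicit.
Lemma distinct_pos B (s : seq nat) : uniq s -> all (fun x => 0 < x <= B) s ->
  size s * (size s).+1 <= 2 * sumn s.
Proof.
elim: B s => [|B IH] s Us Hs.
  case: s Us Hs => [|x s] //= _ /andP[]; lia.
case Hin: (B.+1 \in s); last first.
  apply: IH => //; apply/allP => x xs; move/allP: Hs => /(_ x xs) /andP[x0 xB].
  rewrite x0 /=; rewrite leq_eqVlt in xB; case/orP: xB => [/eqP E|] //.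
  by rewrite -E xs in Hin.
have Hsz : size s <= B.+1.
  have -> : B.+1 = size (iota 1 B.+1) by rewrite size_iota.
  apply: uniq_leq_size => // x xs; rewrite mem_iota.
  move/allP: Hs => /(_ x xs); lia.
have Hp := perm_to_rem Hin.
have Hsum := perm_sumn Hp; have Hsz2 := perm_size Hp.
have Ur : uniq (rem B.+1 s) by apply: rem_uniq.
have := IH (rem B.+1 s) Ur.
have Hall : all (fun x => 0 < x <= B) (rem B.+1 s).
  apply/allP => x; rewrite (mem_rem_uniq _ Us) => /andP[xn xs].
  move/allP: Hs => /(_ x xs) /andP[-> /=]; rewrite leq_eqVlt ltnS.
  by case/orP => // /eqP E; rewrite E eqxx in xn.
move/(_ Hall).
rewrite Hsum Hsz2 /=. move: Hsz; rewrite Hsz2 /=. nia.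
Qed.
Lemma leq_sum_nat m n (F G : nat -> nat) :
  (forall i, m <= i < n -> F i <= G i) ->
  \sum_(m <= i < n) F i <= \sum_(m <= i < n) G i.
Proof.
move=> H; rewrite big_nat_cond [X in _ <= X]big_nat_cond.
by apply: leq_sum => i /andP[/H].
Qed.

Section Core.
Variables (a : nat -> nat) (k N : nat).
Hypothesis Hinc : forall i j, i < j -> j < k -> a i < a j.
Hypothesis Hbnd : forall i, i < k -> 0 < a i <= N.
Hypothesis Hsid : forall i j p q, i < k -> j < k -> p < k -> q < k ->
  a i + a j = a p + a q -> (a i = a p /\ a j = a q) \/ (a i = a q /\ a j = a p).

Lemma a_inj i j : i < k -> j < k -> a i = a j -> i = j.
Proof.
move=> ik jk E; case: (ltngtP i j) => // H.
  by have := Hinc H jk; rewrite E ltnn.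
by have := Hinc H ik; rewrite E ltnn.
Qed.

Lemma tele r n : n + r <= k ->
  \sum_(0 <= i < n) (a (i + r) - a i) + \sum_(0 <= i < r) a i
  = \sum_(0 <= i < r) a (i + n).
Proof.
elim: n => [|n IH] H.
  by rewrite big_geq // add0n; apply: eq_bigr => i _; rewrite addn0.
rewrite big_nat_recr //=.
have IH2 := IH (leq_trans (leqnSn _) (leq_trans (leqnn _) H)).
have e1 : \sum_(0 <= i < r.+1) a (i + n) = \sum_(0 <= i < r) a (i + n) + a (r + n)
  by rewrite big_nat_recr.
have e2 : \sum_(0 <= i < r.+1) a (i + n) = a n + \sum_(0 <= i < r) a (i + n.+1).
  by rewrite big_nat_recl // add0n; congr (_ + _); apply: eq_bigr => i _; rewrite addSnnS.
have Hm : a n <= a (n + r).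
  case: r H {IH IH2 e1 e2} => [|r] H; first by rewrite addn0.
  apply: ltnW; apply: Hinc; lia.
rewrite addnC in e1.
have : a (r + n) = a (n + r) by rewrite addnC.

lia.
Qed.

Lemma rowbound r : r <= k ->
  \sum_(0 <= i < k - r) (a (i + r) - a i) + r <= r * N.
Proof.
move=> rk; have := tele (n := k - r) (r := r); rewrite subnK // => /(_ (leqnn _)) E.
have L1 : r <= \sum_(0 <= i < r) a i.
  have := leq_sum_nat (m := 0) (n := r) (F := fun _ => 1) (G := a).
  rewrite sum_nat_const_nat subn0 muln1; apply => i /andP[_ ir].
  by case/andP: (Hbnd (leq_trans ir rk)).
have L2 : \sum_(0 <= i < r) a (i + (k - r)) <= r * N.
  have := leq_sum_nat (m := 0) (n := r) (F := fun i => a (i + (k - r))) (G := fun _ => N).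
  rewrite sum_nat_const_nat subn0; apply => i /andP[_ ir].
  have : i + (k - r) < k by lia.
  by move/Hbnd/andP=> [].
lia.
Qed.

Definition L m := [seq a (i + r) - a i | r <- index_iota 1 m.+1, i <- index_iota 0 (k - r)].

Lemma L_uniq m : uniq (L m).
Proof.
apply: allpairs_uniq_dep.
- exact: iota_uniq.
- by move=> x _; exact: iota_uniq.
move=> p1 p2 /allpairsPdep [r1 [i1 [r1m i1k ->]]] /allpairsPdep [r2 [i2 [r2m i2k ->]]] /=.
move: r1m i1k r2m i2k; rewrite !mem_index_iota => r1m i1k r2m i2k E.
have H1 : a (i1 + r1) > a i1 by apply: Hinc; lia.
have H2 : a (i2 + r2) > a i2 by apply: Hinc; lia.
have E2 : a (i1 + r1) + a i2 = a (i2 + r2) + a i1 by lia.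
case: (Hsid _ _ _ _ E2); try lia.
  case=> [Ea Eb]; have ei : i1 = i2 by apply: (a_inj _ _ (esym Eb)); lia.
  have ej : i1 + r1 = i2 + r2 by apply: (a_inj _ _ Ea); lia.
  have er : r1 = r2 by lia.
  by subst.
Qed.

Lemma L_pos m : m <= k -> all (fun x => 0 < x <= N) (L m).
Proof.
move=> mk; apply/allP => x /allpairsPdep [r [i [rm ik ->]]].
move: rm ik; rewrite !mem_index_iota => rm ik.
have H1 : a (i + r) > a i by apply: Hinc; lia.
have : i + r < k by lia.
move/Hbnd; lia.
Qed.

Lemma L_size m : size (L m) = \sum_(1 <= r < m.+1) (k - r).
Proof.
rewrite size_allpairs_dep sumnE big_map; apply: eq_bigr => r _.
by rewrite size_iota subn0.
Qed.

Lemma L_sum m : m <= k ->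
  sumn (L m) + \sum_(1 <= r < m.+1) r <= N * \sum_(1 <= r < m.+1) r.
Proof.
move=> mk; rewrite sumnE big_allpairs_dep /= -big_split /= big_distrr /=.
apply: leq_sum_nat => r /andP[r1 rm].
rewrite mulnC; apply: rowbound; lia.
Qed.
End Core.
Lemma isqrt_sq n : isqrt n * isqrt n <= n.
Proof.
rewrite /isqrt; apply: (big_ind (fun x => x * x <= n)) => //.
move=> x y Hx Hy; rewrite /maxn; by case: ifP.
Qed.

Lemma isqrt_ge n j : j * j <= n -> j <= isqrt n.
Proof.
move=> H; have jn : j < n.+1 by nia.
exact: (leq_bigmax_cond (F := fun k : 'I_n.+1 => nat_of_ord k) (Ordinal jn) H).
Qed.

Lemma isqrt_lt n : n < (isqrt n).+1 * (isqrt n).+1.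
Proof. by rewrite ltnNge; apply/negP => /isqrt_ge; rewrite ltnn. Qed.

Lemma sum_id m : 2 * \sum_(1 <= r < m.+1) r = m * m.+1.
Proof.
elim: m => [|m IH]; first by rewrite big_geq.
rewrite big_nat_recr //= mulnDr IH; lia.
Qed.

Lemma sum_sub m c : m <= c -> \sum_(1 <= r < m.+1) (c - r) + \sum_(1 <= r < m.+1) r = m * c.
Proof.
move=> mc; rewrite -big_split /= (eq_big_nat _ _ (F2 := fun _ => c)).
  by rewrite sum_nat_const_nat subSS subn0.
move=> i /andP[_ im]; rewrite subnK //; lia.
Qed.
Lemma poly s t : 2 <= t -> s <= t * t + 2 * t ->
  4 * (s * s + 2 * s) * (t * t + t) < (2 * t * s + t * t + 5 * t) * (2 * t * s + t * t + 5 * t + 2) + 4 * (t * t + t).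
Proof.
move=> t2 st.
have H : t * s * s <= t * s * (t * t + 2 * t) by rewrite leq_mul2l st orbT.
nia.
Qed.

Lemma arith s t N k M T SL : 0 < N -> 2 <= t -> t * t <= s -> s < t.+1 * t.+1 ->
  N < s.+1 * s.+1 -> s + t + 3 <= k ->
  M * M.+1 <= 2 * SL -> SL + T <= N * T -> 2 * T = t * t.+1 -> M + T = t * k -> False.
Proof.
move=> N0 t2 ts st Ns ks HM HS HT HMk.
have HSL : SL <= (N - 1) * T by rewrite mulnBl mul1n; lia.
have Hk : t * (s + t + 3) <= t * k by rewrite leq_mul2l ks orbT.
set Y := 2 * t * s + t * t + 5 * t.
have HY : Y <= 2 * M.
  have : t * t.+1 = t * t + t by lia.
  have : t * (s + t + 3) = t * s + t * t + 3 * t by lia.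
  rewrite /Y; lia.
have H2 : Y * (Y + 2) <= (2 * M) * (2 * M + 2) by apply: leq_mul; lia.
have H1 : (2 * M) * (2 * M + 2) <= 4 * (N - 1) * (t * t + t).
  have -> : (2 * M) * (2 * M + 2) = 4 * (M * M.+1) by lia.
  have -> : t * t + t = 2 * T by rewrite HT mulnS addnC.
  have : 4 * (M * M.+1) <= 4 * (2 * SL) by rewrite leq_mul2l HM orbT.
  have : 2 * SL <= 2 * ((N - 1) * T) by rewrite leq_mul2l HSL orbT.
  move=> B A.
  have B' : 4 * (2 * SL) <= 4 * (2 * ((N - 1) * T)) by rewrite leq_mul2l B orbT.
  lia.
have H3 : 4 * (N - 1) * (t * t + t) + 4 * (t * t + t) <= 4 * (s * s + 2 * s) * (t * t + t).
  have -> : 4 * (N - 1) * (t * t + t) + 4 * (t * t + t) = 4 * N * (t * t + t).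
    case: N N0 Ns {HSL H1 HS} => [|N] // _ Ns.
    rewrite subSS subn0; lia.
  apply: leq_mul => //; apply: leq_mul => //; lia.
have H4 : s <= t * t + 2 * t by nia.
have := @poly s t t2 H4; rewrite -/Y; lia.
Qed.

Theorem mainTheorem9 (N : nat) : 16 <= N ->
  h N <= isqrt N + isqrt (isqrt N) + 2.
Proof.
move=> N16; apply/bigmax_leqP => A /andP[A0 HS].
set s0 := sort leq [seq val x | x <- enum A].
set a := fun i => nth 0 s0 i.
have Hk : size s0 = #|A| by rewrite size_sort size_map cardE.
set k := #|A|.
have Hsort : sorted ltn s0.
  rewrite ltn_sorted_uniq_leq sort_uniq (map_inj_uniq val_inj) enum_uniq /=.
  exact: (sort_sorted leq_total).
have Hinc : forall i j, i < j -> j < k -> a i < a j.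
  move=> i j ij jk; apply: (sorted_ltn_nth ltn_trans 0 Hsort) => //; rewrite inE Hk //.
  exact: ltn_trans ij jk.
have Hmem : forall i, i < k -> exists2 x, x \in A & a i = val x.
  move=> i ik; have : a i \in s0 by apply: mem_nth; rewrite Hk.
  rewrite mem_sort => /mapP [x]; rewrite mem_enum => xA ->; by exists x.
have Hbnd : forall i, i < k -> 0 < a i <= N.
  move=> i /Hmem [x xA ->]; rewrite -[_ <= N]ltnS ltn_ord andbT lt0n; apply/negP => /eqP x0.
  have : x = ord0 by apply: val_inj.
  by move=> E; move: xA A0; rewrite E => ->.
have Hsid : forall i j p q, i < k -> j < k -> p < k -> q < k ->
    a i + a j = a p + a q -> (a i = a p /\ a j = a q) \/ (a i = a q /\ a j = a p).
  move=> i j p q /Hmem [x xA ->] /Hmem [y yA ->] /Hmem [z zA ->] /Hmem [w wA ->] E.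
  move/forall_inP: HS => /(_ x xA) /forall_inP /(_ y yA) /forall_inP /(_ z zA)
    /forall_inP /(_ w wA) /implyP /(_ (introT eqP E)).
  case/orP => /andP [/eqP -> /eqP ->]; [left|right]; by split.
set s := isqrt N; set t := isqrt s.
have s4 : 4 <= s by apply: isqrt_ge; lia.
have t2 : 2 <= t by apply: isqrt_ge; lia.
have ts : t * t <= s := isqrt_sq s.
have st : s < t.+1 * t.+1 := isqrt_lt s.
have Ns : N < s.+1 * s.+1 := isqrt_lt N.
rewrite leqNgt; apply/negP => ks.
have tk : t <= k by lia.
have U := L_uniq Hinc Hsid t.
have P := L_pos Hinc Hbnd tk.
have D := distinct_pos U P.
have LS := L_sum Hinc Hbnd tk.
have HT := sum_id t.
have HMk := sum_sub tk.
rewrite L_size in D.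
apply: (@arith s t N k _ _ _ _ t2 ts st Ns _ D LS HT HMk); lia.
Qed.
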